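(* Consider a Behavioral Security Game on an attack graph in which the attack success probability on each edge is $p_{i,j}(x_{i,j})=e^{-x_{i,j}}$, and let $B=\sum_{D_k\in\mathcal{D}}B_k$ be the sum of the budgets of all defenders. Then for any attack graph and any profile of behavioral levels $\{\alpha_k\}$ with $\alpha_k\in(0,1]$, the Price of Behavioral Anarchy satisfies $PoBA\le\exp(B)$.
   Context: An attack graph is a finite directed graph $G=(V,\mathcal{E})$ with source node $v_s$; $\mathcal{P}_m$ is the set of directed paths from $v_s$ to $v_m$ (as sets of edges); assets are reachable from $v_s$. Each defender $D_k\in\mathcal{D}$ owns assets $V_k\subseteq V\setminus\{v_s\}$ with losses $L_m\ge0$, has budget $B_k\ge0$ and strategy set $X_k=\{x_k\in\mathbb{R}^{|\mathcal{E}|}_{\ge0}:\mathbf{1}^Tx_k\le B_k\}$; the total investment on edge $(v_i,v_j)$ is $x_{i,j}=\sum_k x^k_{i,j}$. Defender $D_k$'s perceived cost is $C_k(x_k,\mathbf{x}_{-k})=\sum_{v_m\in V_k}L_m\max_{P\in\mathcal{P}_m}\prod_{(v_i,v_j)\in P}w_k(p_{i,j}(x_{i,j}))$ with Prelec weighting $w_k(p)=\exp[-(-\log p)^{\alpha_k}]$, and her true expected cost $\hat C_k$ is the same expression with $w_k$ replaced by the identity. Let $\hat C(\mathbf{x})=\sum_{D_k}\hat C_k(\mathbf{x})$. Let $X^{NE}$ be the set of pure Nash equilibria, i.e., profiles $\bar{\mathbf{x}}$ with $\bar x_k\in\arg\min_{x\in X_k}C_k(x,\bar{\mathbf{x}}_{-k})$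 for all $D_k$. Let $X^{Soc}=\{\mathbf{x}\in\mathbb{R}^{|\mathcal{D}||\mathcal{E}|}_{\ge0}:\mathbf{1}^T\mathbf{x}\le\sum_kB_k\}$ and $\mathbf{x}^*\in\arg\min_{\mathbf{x}\in X^{Soc}}\hat C(\mathbf{x})$. The Price of Behavioral Anarchy is $PoBA=\sup_{\bar{\mathbf{x}}\in X^{NE}}\hat C(\bar{\mathbf{x}})/\hat C(\mathbf{x}^* )$. *)

(* Defs.v *)
From HB Require Import structures.
From mathcomp Require Import all_boot all_order all_algebra.
From mathcomp Require Import all_classical all_reals all_analysis.
Set Implicit Arguments. Unset Strict Implicit. Unset Printing Implicit Defensive.
Import Order.TTheory GRing.Theory Num.Theory.
Local Open Scope ring_scope.

Definition is_pathb (V E : finType) (src tgt : E -> V) (vs vm : V) (s : seq E)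
  : bool :=
  match s with
  | [::] => false
  | e :: s' => [&& src e == vs, path (fun a b => tgt a == src b) e s',
                  tgt (last e s') == vm & uniq (vs :: map tgt s)]
  end.

(* P_m : the set of directed paths from vs to vm, each as a set of edges.
   A simple path has fewer than #|V| edges, so the quantification is finite. *)
Definition paths (V E : finType) (src tgt : E -> V) (vs vm : V)
  : {set {set E}} :=
  [set P : {set E} | [exists n : 'I_#|V|, exists t : n.-tuple E,
      is_pathb src tgt vs vm t && (P == [set e in t])]].

(* max over P in Ps of prod_{e in P} f e (all values used are >= 0). *)
Definition pathmax (R : realDomainType) (E : finType) (f : E -> R)
  (Ps : {set {set E}}) : R :=
  \big[Num.max/0]_(P in Ps) \prod_(e in P) f e.

Definition pexp (R : realType) (x : R) : R := expR (- x).

Definition prelec (R : realType) (alpha : R) (p : R) : R :=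
  expR (- ((- ln p) `^ alpha)).

Definition xtot (R : realType) (K E : finType) (xs : K -> E -> R) (e : E) : R :=
  \sum_(k : K) xs k e.

Definition cost (R : realType) (V E K : finType) (src tgt : E -> V) (vs : V)
  (w : R -> R) (Vk : {set V}) (L : V -> R) (xs : K -> E -> R) : R :=
  \sum_(m in Vk) L m * pathmax (fun e => w (pexp (xtot xs e))) (paths src tgt vs m).

Definition Cperc (R : realType) (V E K : finType) (src tgt : E -> V) (vs : V)
  (Vs : K -> {set V}) (L : V -> R) (alpha : K -> R) (k : K) (xs : K -> E -> R)
  : R := cost src tgt vs (prelec (alpha k)) (Vs k) L xs.

Definition Ctrue (R : realType) (V E K : finType) (src tgt : E -> V) (vs : V)
  (Vs : K -> {set V}) (L : V -> R) (k : K) (xs : K -> E -> R) : R :=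
  cost src tgt vs id (Vs k) L xs.

Definition Csoc (R : realType) (V E K : finType) (src tgt : E -> V) (vs : V)
  (Vs : K -> {set V}) (L : V -> R) (xs : K -> E -> R) : R :=
  \sum_(k : K) Ctrue src tgt vs Vs L k xs.

Definition inX (R : realType) (E : finType) (Bk : R) (y : E -> R) : Prop :=
  (forall e, 0 <= y e) /\ \sum_(e : E) y e <= Bk.

Definition upd (R : realType) (K E : finType) (xs : K -> E -> R) (k : K)
  (y : E -> R) : K -> E -> R :=
  fun j => if j == k then y else xs j.

Definition isNE (R : realType) (V E K : finType) (src tgt : E -> V) (vs : V)
  (Vs : K -> {set V}) (L : V -> R) (B alpha : K -> R) (xs : K -> E -> R)
  : Prop :=
  forall k, inX (B k) (xs k) /\
    forall y, inX (B k) y ->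
      Cperc src tgt vs Vs L alpha k xs <= Cperc src tgt vs Vs L alpha k (upd xs k y).

Definition inXsoc (R : realType) (K E : finType) (Btot : R) (xs : K -> E -> R)
  : Prop :=
  (forall k e, 0 <= xs k e) /\ \sum_(k : K) \sum_(e : E) xs k e <= Btot.

(* Main.v *)
Require Import Defs.
From HB Require Import structures.
From mathcomp Require Import all_boot all_order all_algebra.
From mathcomp Require Import all_classical all_reals all_analysis.
Import Order.TTheory GRing.Theory Num.Theory.
Local Open Scope ring_scope.

Lemma max_seq_ge (R : realDomainType) (I : eqType) (r : seq I) (Q : pred I)
  (F : I -> R) x :
  x \in r -> Q x -> F x <= \big[Num.max/0]_(i <- r | Q i) F i.
Proof.
move=> + Qx; elim: r => [//|a r IH]; rewrite inE big_cons => /orP [/eqP <-|xr].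
  by rewrite Qx le_max lexx.
by case: (Q a); rewrite ?le_max IH ?orbT.
Qed.

Lemma pathmax_ge (R : realDomainType) (E : finType) (f : E -> R)
  (Ps : {set {set E}}) P : P \in Ps -> \prod_(e in P) f e <= pathmax f Ps.
Proof.
move=> HP; rewrite /pathmax.
exact: (@max_seq_ge R _ (index_enum _) (mem Ps) (fun P => \prod_(e in P) f e) P (mem_index_enum P) HP).
Qed.

Lemma pathmax_le1 (R : realDomainType) (E : finType) (f : E -> R)
  (Ps : {set {set E}}) : (forall e, 0 <= f e <= 1) -> pathmax f Ps <= 1.
Proof.
move=> Hf; rewrite /pathmax; apply: (big_ind (fun x => x <= 1)) => //.
  by move=> x y hx hy; rewrite ge_max hx hy.
by move=> P _; apply: prodr_ile1 => e _; exact: Hf.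
Qed.

Theorem proposition5 (R : realType) (V E K : finType) (src tgt : E -> V)
  (vs : V) (Vs : K -> {set V}) (L : V -> R) (B alpha : K -> R)
  (Hsimple : injective (fun e => (src e, tgt e)))
  (Hassets : forall k, vs \notin Vs k)
  (HL : forall m, 0 <= L m)
  (HB : forall k, 0 <= B k)
  (Halpha : forall k, 0 < alpha k <= 1)
  (Hreach : forall k m, m \in Vs k -> paths src tgt vs m != finset.set0)
  (xstar : K -> E -> R)
  (Hxstar : inXsoc (\sum_(k : K) B k) xstar)
  (Hopt : forall x : K -> E -> R, inXsoc (\sum_(k : K) B k) x ->
     Csoc src tgt vs Vs L xstar <= Csoc src tgt vs Vs L x)
  (xbar : K -> E -> R)
  (HNE : isNE src tgt vs Vs L B alpha xbar) :
  Csoc src tgt vs Vs L xbar / Csoc src tgt vs Vs L xstar <= expR (\sum_(k : K) B k).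
Proof.
set Bt := \sum_(k : K) B k.
set S := \sum_(k : K) \sum_(m in Vs k) L m.
have Hup : Csoc src tgt vs Vs L xbar <= S.
  rewrite /Csoc /Ctrue /cost; apply: ler_sum => k _; apply: ler_sum => m _.
  apply: ler_piMr => //; apply: pathmax_le1 => e /=.
  have x0 : 0 <= xtot xbar e.
    by rewrite /xtot; apply: sumr_ge0 => j _; case: (HNE j) => [[h _] _].
  rewrite /pexp expR_ge0 /= -expR0 ler_expR; by rewrite oppr_le0.
have Hlow : expR (- Bt) * S <= Csoc src tgt vs Vs L xstar.
  rewrite /S mulr_sumr /Csoc /Ctrue /cost; apply: ler_sum => k _.
  rewrite mulr_sumr; apply: ler_sum => m Hm.
  rewrite mulrC; apply: ler_wpM2l => //.
  case/set0Pn: (Hreach k m Hm) => P HP.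
  apply: (le_trans _ (@pathmax_ge _ _ (fun e => pexp (xtot xstar e)) _ _ HP)) => /=.
  rewrite /pexp -big_enum -expR_sum ler_expR sumrN lerN2 big_enum /=.
  case: Hxstar => Hx0 Hxs.
  have xt0 : forall e, 0 <= xtot xstar e.
    by move=> e; rewrite /xtot; apply: sumr_ge0.
  apply: le_trans _ Hxs.
  apply: (le_trans (_ : _ <= \sum_(e : E) xtot xstar e)).
    by rewrite [X in _ <= X](bigID (mem P)) /= lerDl sumr_ge0.
  by rewrite /xtot exchange_big.
have HS : S <= expR Bt * Csoc src tgt vs Vs L xstar.
  apply: le_trans _ (ler_wpM2l (expR_ge0 Bt) Hlow).
  by rewrite mulrA -expRD subrr expR0 mul1r.
have C0 : 0 <= Csoc src tgt vs Vs L xstar.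
  apply: le_trans _ Hlow; apply: mulr_ge0 (expR_ge0 _) _; do 2 apply: sumr_ge0 => ? _; exact: HL.
case: (eqVneq (Csoc src tgt vs Vs L xstar) 0) => [->|Cn0].
  by rewrite invr0 mulr0 expR_ge0.
have Cp : 0 < Csoc src tgt vs Vs L xstar by rewrite lt0r Cn0.
by rewrite ler_pdivrMr //; apply: le_trans Hup HS.
Qed.
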